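(* Let $a>0$, $\rho>0$ and let $(k_j)_{j\ge 1}$ be a sequence of positive reals. Let $X_1,X_2,\dots$ be random variables such that each $X_j$ has the $\mathrm{GWD}(a,k_j;\rho)$ distribution and, for each $n\ge 1$, the vector $(X_1,\dots,X_n)$ has the $\mathrm{MGWD}(a;k_1,\dots,k_n;\rho)$ distribution. Put $S=\sum_{j=1}^\infty X_j$. If $m=\sum_{j=1}^\infty k_j<\infty$, then $S<\infty$ with probability $1$ and $S$ has the $\mathrm{GWD}(a,m;\rho)$ distribution. If $\sum_{j=1}^\infty k_j=\infty$, then $S=\infty$ with probability $1$.
   Context: For $x>0$ and $\beta\ge 0$ write $x_{(\beta)}=\Gamma(x+\beta)/\Gamma(x)$. For $a,k,\rho>0$ the generalized Waring distribution $\mathrm{GWD}(a,k;\rho)$ is the probability law on $\{0,1,2,\dots\}$ given by $P(X=n)=\frac{\rho_{(k)}}{(\rho+a)_{(k)}}\,\frac{a_{(n)}\,k_{(n)}}{(\rho+a+k)_{(n)}}\,\frac{1}{n!}$, $n=0,1,2,\dots$. For $a,\rho>0$ and $k_1,\dots,k_s>0$, the multivariate generalized Waring distribution $\mathrm{MGWD}(a;k_1,\dots,k_s;\rho)$ is the law of a random vector $(X_1,\dots,X_s)$ on $\{0,1,2,\dots\}^s$ with $P(X_i=x_i,\ i=1,\dots,s)=\frac{\rho_{(\sum_i k_i)}\,a_{(\sum_i x_i)}}{(\rho+a)_{(\sum_i k_i+\sum_i x_i)}}\prod_{i=1}^s\frac{(k_i)_{(x_i)}}{x_i!}$. *)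

(* Defs.v *)
From Stdlib Require Import Reals Factorial ClassicalEpsilon.
Open Scope R_scope.

Fixpoint sumR (f : nat -> R) (n : nat) : R :=
  match n with O => 0 | S n' => sumR f n' + f n' end.
Fixpoint prodR (f : nat -> R) (n : nat) : R :=
  match n with O => 1 | S n' => prodR f n' * f n' end.
Fixpoint sumN (f : nat -> nat) (n : nat) : nat :=
  match n with O => O | S n' => (sumN f n' + f n')%nat end.

(* Euler's Gamma function on x > 0, via Gauss' limit formula
   Gamma x = lim_n n! n^x / (x (x+1) ... (x+n)). *)
Definition gauss_seq (x : R) (n : nat) : R :=
  INR (fact n) * Rpower (INR n) x / prodR (fun i => x + INR i) (S n).
Definition Gamma (x : R) : R :=
  epsilon (inhabits 0) (fun l => Un_cv (gauss_seq x) l).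

Definition rising (x beta : R) : R := Gamma (x + beta) / Gamma x.

Definition GWD_pmf (a k rho : R) (n : nat) : R :=
  rising rho k / rising (rho + a) k
  * (rising a (INR n) * rising k (INR n) / rising (rho + a + k) (INR n))
  / INR (fact n).

Definition MGWD_pmf (a : R) (k : nat -> R) (s : nat) (rho : R) (x : nat -> nat) : R :=
  let K := sumR k s in
  let Xs := INR (sumN x s) in
  rising rho K * rising a Xs / rising (rho + a) (K + Xs)
  * prodR (fun i => rising (k i) (INR (x i)) / INR (fact (x i))) s.

(* A probability space: sigma-algebra F of events on Omega and a
   countably additive probability P (defined on all predicates,
   meaningful on events). *)
Definition is_prob_space (Omega : Type) (F : (Omega -> Prop) -> Prop)
    (P : (Omega -> Prop) -> R) : Prop :=
  F (fun _ => True)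
  /\ (forall A, F A -> F (fun w => ~ A w))
  /\ (forall A : nat -> Omega -> Prop, (forall n, F (A n)) ->
        F (fun w => exists n, A n w))
  /\ (forall A, F A -> 0 <= P A)
  /\ P (fun _ => True) = 1
  /\ (forall A : nat -> Omega -> Prop, (forall n, F (A n)) ->
        (forall i j w, i <> j -> A i w -> A j w -> False) ->
        infinite_sum (fun n => P (A n)) (P (fun w => exists n, A n w))).

Definition partial_sum {Omega : Type} (X : nat -> Omega -> nat) (w : Omega) (n : nat) : nat :=
  sumN (fun j => X j w) n.

(* S(w) = s (finite): the nondecreasing partial sums are eventually s *)
Definition S_eq {Omega : Type} (X : nat -> Omega -> nat) (w : Omega) (s : nat) : Prop :=
  exists N, forall n, (N <= n)%nat -> partial_sum X w n = s.

Definition S_inf {Omega : Type} (X : nat -> Omega -> nat) (w : Omega) : Prop :=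
  forall B : nat, exists n, (B <= partial_sum X w n)%nat.

(* Main.v *)
Require Import Defs.
From Stdlib Require Import Reals Factorial Lra Lia ClassicalEpsilon Classical FunctionalExtensionality PropExtensionality.
Open Scope R_scope.
Set Default Proof Using "All".

Lemma sumR_ext (f g : nat -> R) n : (forall i, (i < n)%nat -> f i = g i) -> sumR f n = sumR g n.
Proof. induction n; simpl; intros H; auto. rewrite IHn by (intros; apply H; lia). rewrite H by lia; auto. Qed.

Lemma prodR_ext (f g : nat -> R) n : (forall i, (i < n)%nat -> f i = g i) -> prodR f n = prodR g n.
Proof. induction n; simpl; intros H; auto. rewrite IHn by (intros; apply H; lia). rewrite H by lia; auto. Qed.

Lemma sumN_ext (f g : nat -> nat) n : (forall i, (i < n)%nat -> f i = g i) -> sumN f n = sumN g n.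
Proof. induction n; simpl; intros H; auto. rewrite IHn by (intros; apply H; lia). rewrite H by lia; auto. Qed.

Lemma sumR_shift f n : sumR f (S n) = f O + sumR (fun i => f (S i)) n.
Proof. induction n; simpl in *; [lra|]. rewrite IHn. lra. Qed.

Lemma prodR_shift f n : prodR f (S n) = f O * prodR (fun i => f (S i)) n.
Proof. induction n; simpl in *; [lra|]. rewrite IHn. lra. Qed.

Lemma sumN_shift f n : sumN f (S n) = (f O + sumN (fun i => f (S i)) n)%nat.
Proof. induction n; simpl in *; [lia|]. rewrite IHn. lia. Qed.

Lemma sumR_scal c f n : sumR (fun i => c * f i) n = c * sumR f n.
Proof. induction n; simpl; [ring|]. rewrite IHn; ring. Qed.

Lemma sumR_plus f g n : sumR (fun i => f i + g i) n = sumR f n + sumR g n.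
Proof. induction n; simpl; [ring|]. rewrite IHn; ring. Qed.

Lemma sumR_le f g n : (forall i, (i < n)%nat -> f i <= g i) -> sumR f n <= sumR g n.
Proof. induction n; simpl; intros H; [lra|]. assert (f n <= g n) by (apply H; lia).
 assert (sumR f n <= sumR g n) by (apply IHn; intros; apply H; lia). lra. Qed.

Lemma sumR_nonneg_mono f n m : (forall i, 0 <= f i) -> (n <= m)%nat -> sumR f n <= sumR f m.
Proof. intros H Hm; induction Hm; simpl; [lra|]. specialize (H m); lra. Qed.

Lemma prodR_pos f n : (forall i, (i < n)%nat -> 0 < f i) -> 0 < prodR f n.
Proof. induction n; simpl; intros H; [lra|]. apply Rmult_lt_0_compat; [apply IHn; intros; apply H; lia| apply H; lia]. Qed.

Lemma prodR_le f g n : (forall i, (i < n)%nat -> 0 <= f i <= g i) -> prodR f n <= prodR g n.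
Proof. induction n; simpl; intros H; [lra|].
 assert (Hn : 0 <= f n <= g n) by (apply H; lia).
 assert (Hi : forall i, (i<n)%nat -> 0 <= f i <= g i) by (intros; apply H; lia).
 assert (0 <= prodR f n). { clear IHn H Hn. induction n; simpl; [lra|]. apply Rmult_le_pos; [apply IHn|]; intros; try apply Hi; lia. }
 apply Rmult_le_compat; try lra. apply IHn; auto. Qed.

Lemma prodR_div f g n : (forall i, (i<n)%nat -> g i <> 0) -> prodR f n / prodR g n = prodR (fun i => f i / g i) n.
Proof. induction n; simpl; intros H; [field|].
 assert (prodR g n <> 0). { clear IHn. induction n; simpl. lra. apply Rmult_integral_contrapositive; split; [apply IHn|]; intros; apply H; lia. }
 assert (g n <> 0) by (apply H; lia).
 rewrite <- IHn by (intros; apply H; lia). field; auto. Qed.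

Definition poch (u : R) (j : nat) : R := prodR (fun i => u + INR i) j.
Definition cc (u : R) (j : nat) : R := poch u j / INR (fact j).

Lemma INR_fact_pos j : 0 < INR (fact j).
Proof. apply lt_0_INR, lt_O_fact. Qed.

Lemma cc_S u j : INR (S j) * cc u (S j) = (u + INR j) * cc u j.
Proof. unfold cc, poch. simpl prodR. rewrite fact_simpl, mult_INR.
 assert (0 < INR (fact j)) by apply INR_fact_pos. assert (0 < INR (S j)) by (apply lt_0_INR; lia).
 field. lra. Qed.

Lemma cc_0 u : cc u 0 = 1.
Proof. unfold cc, poch; simpl. field. Qed.

Definition Dv (u v : R) (j : nat) := sumR (fun t => cc u t * cc v (j - t)) (S j).

Lemma Dv_rec u v j : INR (S j) * Dv u v (S j) = (u + v + INR j) * Dv u v j.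
Proof.
 unfold Dv.
 assert (E1 : forall t, (t < S (S j))%nat -> INR (S j) * (cc u t * cc v (S j - t)) =
   INR t * cc u t * cc v (S j - t) + cc u t * (INR (S j - t) * cc v (S j - t))).
 { intros t Ht. rewrite minus_INR by lia. ring. }
 rewrite <- sumR_scal. rewrite (sumR_ext _ _ _ E1). rewrite sumR_plus.
 rewrite sumR_shift. simpl (INR 0). rewrite Rmult_0_l, Rmult_0_l, Rplus_0_l.
 assert (E2 : forall t, (t < S j)%nat -> INR (S t) * cc u (S t) * cc v (S j - S t) = (u + INR t) * cc u t * cc v (j - t)).
 { intros t Ht. rewrite cc_S. replace (S j - S t)%nat with (j - t)%nat by lia. ring. }
 rewrite (sumR_ext _ _ _ E2).
 change (sumR (fun t => cc u t * (INR (S j - t) * cc v (S j - t))) (S (S j))) with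
   (sumR (fun t => cc u t * (INR (S j - t) * cc v (S j - t))) (S j) + cc u (S j) * (INR (S j - S j) * cc v (S j - S j))).
 rewrite Nat.sub_diag. simpl (INR 0). rewrite Rmult_0_l, Rmult_0_r, Rplus_0_r.
 assert (E3 : forall t, (t < S j)%nat -> cc u t * (INR (S j - t) * cc v (S j - t)) = cc u t * ((v + INR (j - t)) * cc v (j - t))).
 { intros t Ht. replace (S j - t)%nat with (S (j - t)) by lia. rewrite cc_S. ring. }
 rewrite (sumR_ext _ _ _ E3).
 rewrite <- sumR_plus. rewrite <- sumR_scal. apply sumR_ext. intros t Ht.
 rewrite minus_INR by lia. ring.
Qed.

Lemma vandermonde u v j : Dv u v j = cc (u + v) j.
Proof.
 induction j.
 - unfold Dv; simpl. rewrite !cc_0. ring.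
 - assert (H := Dv_rec u v j). rewrite IHj in H. rewrite <- cc_S in H.
   assert (0 < INR (S j)) by (apply lt_0_INR; lia).
   apply Rmult_eq_reg_l with (INR (S j)); lra.
Qed.

Lemma lim_le_ev (u : nat -> R) l b N : Un_cv u l -> (forall m, (N <= m)%nat -> u m <= b) -> l <= b.
Proof. intros Hu Hb. destruct (Rle_dec l b) as [|Hn]; auto. exfalso.
 destruct (Hu (l - b)) as [M HM]; [lra|]. specialize (HM (max N M) ltac:(lia)). specialize (Hb (max N M) ltac:(lia)).
 unfold R_dist in HM. apply Rabs_def2 in HM. lra. Qed.

Lemma lim_ge_ev (u : nat -> R) l b N : Un_cv u l -> (forall m, (N <= m)%nat -> b <= u m) -> b <= l.
Proof. intros Hu Hb. destruct (Rle_dec b l) as [|Hn]; auto. exfalso.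
 destruct (Hu (b - l)) as [M HM]; [lra|]. specialize (HM (max N M) ltac:(lia)). specialize (Hb (max N M) ltac:(lia)).
 unfold R_dist in HM. apply Rabs_def2 in HM. lra. Qed.

Lemma cv_unshift (u : nat -> R) l : Un_cv (fun n => u (S n)) l -> Un_cv u l.
Proof. intros H e He. destruct (H e He) as [N HN]. exists (S N). intros n Hn.
 destruct n; [lia|]. apply HN; lia. Qed.

Lemma cv_shift (u : nat -> R) l : Un_cv u l -> Un_cv (fun n => u (S n)) l.
Proof. intros H e He. destruct (H e He) as [N HN]. exists N. intros n Hn. apply HN; lia. Qed.

Lemma cv_const c : Un_cv (fun _ => c) c.
Proof. intros e He. exists O. intros. unfold R_dist. rewrite Rminus_diag, Rabs_R0. lra. Qed.

Lemma cv_ext (u v : nat -> R) l : (forall n, u n = v n) -> Un_cv u l -> Un_cv v l.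
Proof. intros H Hu e He. destruct (Hu e He) as [N HN]. exists N. intros. rewrite <- H. auto. Qed.

Lemma cont_id x : continuity_pt (fun y => y) x.
Proof. apply derivable_continuous_pt, derivable_pt_id. Qed.

Lemma cv_inv (u : nat -> R) l : Un_cv u l -> l <> 0 -> Un_cv (fun n => / u n) (/ l).
Proof. intros H Hl. apply (continuity_seq (fun x => / x)); auto.
 apply (continuity_pt_inv (fun x => x)); auto. apply cont_id. Qed.

Lemma cv_div (u v : nat -> R) l1 l2 : Un_cv u l1 -> Un_cv v l2 -> l2 <> 0 -> Un_cv (fun n => u n / v n) (l1 / l2).
Proof. intros. unfold Rdiv. apply CV_mult; auto. apply cv_inv; auto. Qed.

Lemma cv_c_over_n c d : 0 < d -> Un_cv (fun n => c / (INR n + d)) 0.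
Proof. intros Hd e He.
 destruct (INR_archimed e (Rabs c) He) as [N HN]. exists N. intros n Hn. unfold R_dist. rewrite Rminus_0_r.
 assert (0 <= INR n) by apply pos_INR. assert (INR N <= INR n) by (apply le_INR; lia).
 unfold Rdiv. rewrite Rabs_mult, Rabs_inv, (Rabs_right (INR n + d)) by lra.
 apply Rmult_lt_reg_r with (INR n + d); [lra|]. rewrite Rmult_assoc, Rinv_l by lra.
 assert (e * INR N <= e * (INR n + d)) by (apply Rmult_le_compat_l; lra). lra. Qed.

Lemma exists_nat_gt x : exists n : nat, x < INR n.
Proof. destruct (INR_archimed 1 x) as [n Hn]; [lra|]. exists n. lra. Qed.

Lemma Rdiv_le_0_compat a b : 0 <= a -> 0 < b -> 0 <= a / b.
Proof. intros. unfold Rdiv. apply Rmult_le_pos; auto. left; apply Rinv_0_lt_compat; auto. Qed.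

Lemma ln_div x y : 0 < x -> 0 < y -> ln (x / y) = ln x - ln y.
Proof. intros. unfold Rdiv. rewrite ln_mult, ln_Rinv; try lra. apply Rinv_0_lt_compat; auto. Qed.

Lemma ln_le_sub1 z : 0 < z -> ln z <= z - 1.
Proof. intros Hz. assert (H := exp_ineq1_le (ln z)). rewrite exp_ln in H; lra. Qed.

Lemma ln_succ_bounds p : 0 < p -> / (p + 1) <= ln (p + 1) - ln p <= / p.
Proof. intros Hp. split.
 - assert (H := ln_le_sub1 (p / (p+1)) ltac:(apply Rdiv_lt_0_compat; lra)).
   rewrite ln_div in H by lra. assert (p / (p+1) - 1 = - / (p+1)) by (field; lra). lra.
 - assert (H := ln_le_sub1 ((p+1) / p) ltac:(apply Rdiv_lt_0_compat; lra)).
   rewrite ln_div in H by lra. assert ((p+1) / p - 1 = / p) by (field; lra). lra.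
Qed.

Lemma exp_le_mono x y : x <= y -> exp x <= exp y.
Proof. intros [H|H]; [left; apply exp_increasing; auto| subst; lra]. Qed.

Lemma exp_small t : 0 <= t <= /2 -> exp t <= 1 + 2 * t.
Proof. intros Ht. assert (H := exp_ineq1_le (- t)).
 assert (exp t * exp (-t) = 1) by (rewrite <- exp_plus; replace (t + - t) with 0 by ring; apply exp_0).
 assert (0 < exp t) by apply exp_pos. nra. Qed.

Definition CC (x : R) := x * (1 + x).
Definition rt (x p : R) := (p + 1) * exp (x * (ln (p + 1) - ln p)) / (x + p + 1).

Lemma INR_S_pos n : 0 < INR (S n).
Proof. apply lt_0_INR; lia. Qed.

Lemma prodx_pos x n : 0 < x -> 0 < prodR (fun i => x + INR i) n.
Proof. intros. apply prodR_pos. intros. assert (0 <= INR i) by apply pos_INR. lra. Qed.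

Lemma gs_pos x n : 0 < x -> 0 < gauss_seq x n.
Proof. intros Hx. unfold gauss_seq, Rpower. apply Rdiv_lt_0_compat.
 - apply Rmult_lt_0_compat; [apply INR_fact_pos| apply exp_pos].
 - apply prodx_pos; auto. Qed.

Lemma gs_S x n : 0 < x -> gauss_seq x (S (S n)) = gauss_seq x (S n) * rt x (INR (S n)).
Proof. intros Hx. unfold gauss_seq, Rpower, rt.
 change (prodR (fun i => x + INR i) (S (S (S n)))) with (prodR (fun i => x + INR i) (S (S n)) * (x + INR (S (S n)))).
 rewrite (fact_simpl (S n)), mult_INR.
 replace (INR (S (S n))) with (INR (S n) + 1) by (rewrite (S_INR (S n)); ring).
 replace (exp (x * ln (INR (S n) + 1))) with (exp (x * ln (INR (S n))) * exp (x * (ln (INR (S n) + 1) - ln (INR (S n))))) by (rewrite <- exp_plus; f_equal; ring).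
 assert (H1 := prodx_pos x (S (S n)) Hx). assert (H2 := INR_S_pos n).
 field. split; lra. Qed.

Lemma rt_ge1 x p : 0 < x -> 0 < p -> 1 <= rt x p.
Proof. intros Hx Hp. unfold rt. destruct (ln_succ_bounds p Hp) as [H1 H2].
 assert (exp (x / (p+1)) <= exp (x * (ln (p + 1) - ln p))).
 { apply exp_le_mono. unfold Rdiv. apply Rmult_le_compat_l; lra. }
 assert (H3 := exp_ineq1_le (x / (p+1))).
 apply Rmult_le_reg_r with (x + p + 1); [lra|]. unfold Rdiv. rewrite Rmult_assoc, Rinv_l by lra.
 assert (1 + x / (p + 1) = (x + p + 1) / (p+1)) by (field; lra).
 assert ((x + p + 1) / (p+1) <= exp (x * (ln (p + 1) - ln p))) by lra.
 assert ((p+1) * ((x + p + 1) / (p+1)) = x + p + 1) by (field; lra). nra. Qed.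

Lemma rt_le x p : 0 < x -> 0 < p -> rt x p <= exp (CC x / p - CC x / (p + 1)).
Proof. intros Hx Hp. unfold rt. destruct (ln_succ_bounds p Hp) as [H1 H2].
 assert (E1 : exp (x * (ln (p + 1) - ln p)) <= exp (x / p)).
 { apply exp_le_mono. unfold Rdiv. apply Rmult_le_compat_l; lra. }
 assert (E2 := exp_ineq1_le (- (x / (x + p + 1)))).
 assert (E3 : (p + 1) / (x + p + 1) <= exp (- (x / (x + p + 1)))).
 { assert (1 + - (x / (x + p + 1)) = (p+1)/(x+p+1)) by (field; lra). lra. }
 assert (E4 : x / p - x / (x + p + 1) <= CC x / p - CC x / (p + 1)).
 { unfold CC. assert (x / p - x / (x + p + 1) = x * (1+x) / (p * (x+p+1))) by (field; lra).
   assert (x * (1 + x) / p - x * (1 + x) / (p + 1) = x * (1+x) / (p * (p+1))) by (field; lra).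
   rewrite H, H0. unfold Rdiv. apply Rmult_le_compat_l; [nra|]. apply Rinv_le_contravar; nra. }
 replace ((p + 1) * exp (x * (ln (p + 1) - ln p)) / (x + p + 1)) with
   (((p + 1) / (x + p + 1)) * exp (x * (ln (p + 1) - ln p))) by (field; lra).
 apply Rle_trans with (exp (- (x / (x + p + 1))) * exp (x / p)).
 { apply Rmult_le_compat; try lra. apply Rdiv_le_0_compat; lra. left; apply exp_pos. }
 rewrite <- exp_plus. apply exp_le_mono. lra. Qed.

Section GammaX.
Variable x : R.
Hypothesis Hx : 0 < x.

Let h n := gauss_seq x (S n).
Let hh n := gauss_seq x (S n) * exp (CC x / INR (S n)).

Lemma h_growing : Un_growing h.
Proof. intros n. unfold h. rewrite gs_S by auto. assert (H := rt_ge1 x (INR (S n)) Hx (INR_S_pos n)).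
 assert (H0 := gs_pos x (S n) Hx). nra. Qed.

Lemma hh_decr n : hh (S n) <= hh n.
Proof. unfold hh. rewrite gs_S by auto. assert (H := rt_le x (INR (S n)) Hx (INR_S_pos n)).
 assert (H0 := gs_pos x (S n) Hx). rewrite (S_INR (S n)).
 rewrite Rmult_assoc. apply Rmult_le_compat_l; [lra|].
 apply Rle_trans with (exp (CC x / INR (S n) - CC x / (INR (S n) + 1)) * exp (CC x / (INR (S n) + 1))).
 - apply Rmult_le_compat_r; [left; apply exp_pos| auto].
 - rewrite <- exp_plus. right; f_equal; ring. Qed.

Lemma hh_le n m : (n <= m)%nat -> hh m <= hh n.
Proof. induction 1; [lra|]. assert (H0 := hh_decr m). lra. Qed.

Lemma h_le_hh n : h n <= hh n.
Proof. unfold h, hh. assert (H0 := gs_pos x (S n) Hx).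
 assert (1 <= exp (CC x / INR (S n))).
 { assert (H := exp_ineq1_le (CC x / INR (S n))). assert (0 <= CC x / INR (S n)).
   { apply Rdiv_le_0_compat; [unfold CC; nra| apply INR_S_pos]. } lra. }
 nra. Qed.

Lemma Gamma_cv : Un_cv (gauss_seq x) (Gamma x).
Proof.
 assert (Hub : has_ub h). { exists (hh O). intros y [n Hn]. subst. apply Rle_trans with (hh n); [apply h_le_hh| apply hh_le; lia]. }
 destruct (growing_cv h h_growing Hub) as [l Hl].
 assert (Hc : Un_cv (gauss_seq x) l) by (apply cv_unshift; exact Hl).
 unfold Gamma. apply (epsilon_spec (inhabits 0) (fun l => Un_cv (gauss_seq x) l)). eauto.
Qed.

Lemma Gamma_lo n : gauss_seq x (S n) <= Gamma x.
Proof. apply (growing_ineq h). apply h_growing. apply cv_shift, Gamma_cv. Qed.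

Lemma Gamma_hi n : Gamma x <= gauss_seq x (S n) * exp (CC x / INR (S n)).
Proof. apply (lim_le_ev h _ _ n). apply cv_shift, Gamma_cv.
 intros m Hm. apply Rle_trans with (hh m); [apply h_le_hh|]. apply hh_le; auto. Qed.

Lemma Gamma_pos : 0 < Gamma x.
Proof. apply Rlt_le_trans with (gauss_seq x 1); [apply gs_pos; auto| apply (Gamma_lo 0)]. Qed.

End GammaX.

Lemma gs_1 x : 0 < x -> gauss_seq x 1 = / (x * (x + 1)).
Proof. intros. unfold gauss_seq, Rpower. simpl. rewrite ln_1. rewrite Rmult_0_r, exp_0. field. lra. Qed.

Lemma gs_plus1 x n : 0 < x -> gauss_seq (x + 1) (S n) = gauss_seq x (S n) * (x * (INR (S n) / (x + 1 + INR (S n)))).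
Proof. intros Hx. unfold gauss_seq, Rpower.
 assert (E : prodR (fun i => x + INR i) (S (S (S n))) = x * prodR (fun i => x + 1 + INR i) (S (S n))).
 { rewrite prodR_shift. simpl (INR 0). rewrite Rplus_0_r. f_equal. apply prodR_ext. intros. rewrite S_INR; ring. }
 change (prodR (fun i => x + INR i) (S (S (S n)))) with (prodR (fun i => x + INR i) (S (S n)) * (x + INR (S (S n)))) in E.
 rewrite (S_INR (S n)) in E.
 replace ((x+1) * ln (INR (S n))) with (x * ln (INR (S n)) + ln (INR (S n))) by ring.
 rewrite exp_plus, exp_ln by apply INR_S_pos.
 assert (H1 := prodx_pos x (S (S n)) Hx). assert (H2 := prodx_pos (x+1) (S (S n)) ltac:(lra)). assert (H3 := INR_S_pos n).
 set (A := prodR (fun i => x + INR i) (S (S n))) in *. set (B := prodR (fun i => x + 1 + INR i) (S (S n))) in *.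
 set (c := INR (S n)) in *. set (f := INR (fact (S n))). set (e := exp (x * ln c)).
 replace B with (A * (x + (c + 1)) / x) by (rewrite E; field; lra).
 field. repeat split; lra. Qed.

Lemma Gamma_S x : 0 < x -> Gamma (x + 1) = x * Gamma x.
Proof. intros Hx.
 assert (A := cv_shift _ _ (Gamma_cv (x+1) ltac:(lra))).
 assert (B : Un_cv (fun n => gauss_seq x (S n) * (x * (INR (S n) / (x + 1 + INR (S n))))) (Gamma x * (x * 1))).
 { apply CV_mult. apply cv_shift, Gamma_cv; auto. apply CV_mult. apply cv_const.
   apply cv_ext with (fun n => 1 - (x + 1) / (INR n + (x + 2))).
   { intros n. rewrite S_INR. field. assert (0 <= INR n) by apply pos_INR. lra. }
   assert (Hm : Un_cv (fun n => 1 - (x + 1) / (INR n + (x + 2))) (1 - 0)).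
   { apply CV_minus. apply cv_const. apply cv_c_over_n. lra. }
   rewrite Rminus_0_r in Hm. exact Hm. }
 assert (C : Un_cv (fun n => gauss_seq (x + 1) (S n)) (Gamma x * (x * 1))).
 { eapply cv_ext; [|exact B]. intros; simpl. rewrite gs_plus1; auto. }
 rewrite (UL_sequence _ _ _ A C). ring. Qed.

Lemma rising_poch u j : 0 < u -> rising u (INR j) = poch u j.
Proof. intros Hu. unfold rising, poch. induction j.
 - simpl. rewrite Rplus_0_r. field. apply Rgt_not_eq, Gamma_pos; auto.
 - simpl prodR. rewrite <- IHj. rewrite S_INR.
   replace (u + (INR j + 1)) with ((u + INR j) + 1) by ring.
   assert (0 <= INR j) by apply pos_INR.
   rewrite Gamma_S by lra. field. apply Rgt_not_eq, Gamma_pos; auto. Qed.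

Lemma rising_add c K t : 0 < c -> 0 < K -> rising c (K + INR t) = rising c K * poch (c + K) t.
Proof. intros Hc HK. rewrite <- rising_poch by lra. unfold rising.
 replace (c + (K + INR t)) with (c + K + INR t) by ring.
 assert (0 < Gamma c) by (apply Gamma_pos; auto). assert (0 < Gamma (c+K)) by (apply Gamma_pos; lra).
 field. lra. Qed.

Lemma cont_prodx m y : continuity_pt (fun y => prodR (fun i => y + INR i) m) y.
Proof. induction m.
 - apply continuity_pt_const. intros u v; reflexivity.
 - simpl. apply (continuity_pt_mult (fun y => prodR (fun i => y + INR i) m) (fun y => y + INR m)); auto.
   apply (continuity_pt_plus (fun y => y) (fun _ => INR m)). apply cont_id. apply continuity_pt_const; intros u v; reflexivity. Qed.

Lemma cont_gs n y : 0 < y -> continuity_pt (fun y => gauss_seq y n) y.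
Proof. intros Hy. unfold gauss_seq, Rpower.
 apply (continuity_pt_div (fun y => INR (fact n) * exp (y * ln (INR n))) (fun y => prodR (fun i => y + INR i) (S n))).
 - apply (continuity_pt_mult (fun _ => INR (fact n)) (fun y => exp (y * ln (INR n)))).
   + apply continuity_pt_const; intros u v; reflexivity.
   + apply (continuity_pt_comp (fun y => y * ln (INR n)) exp).
     * apply (continuity_pt_mult (fun y => y) (fun _ => ln (INR n))). apply cont_id. apply continuity_pt_const; intros u v; reflexivity.
     * apply derivable_continuous_pt, derivable_pt_exp.
 - apply cont_prodx.
 - apply Rgt_not_eq, prodx_pos; auto. Qed.

Lemma CC_mono x y : 0 <= x <= y -> CC x <= CC y.
Proof. unfold CC. intros. nra. Qed.

Lemma Gamma_cont z : 0 < z -> continuity_pt Gamma z.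
Proof. intros Hz.
 set (r := mkposreal (z/2) ltac:(lra)).
 apply (CVU_continuity (fun n y => gauss_seq y (S n)) Gamma z r); [| |unfold Boule; simpl; rewrite Rminus_diag, Rabs_R0; lra].
 2:{ intros n y Hy. unfold Boule in Hy; simpl in Hy. apply Rabs_def2 in Hy. apply cont_gs. lra. }
 set (C1 := CC (3 * z / 2)). set (U := exp C1 / (z/2 * (z/2))).
 assert (HC1 : 0 <= C1) by (unfold C1, CC; nra). assert (HU : 0 < U) by (unfold U; apply Rdiv_lt_0_compat; [apply exp_pos| nra]).
 intros e He.
 destruct (exists_nat_gt (Rmax (2 * C1) (2 * U * C1 / e))) as [N HN].
 exists N. intros n y Hn Hy. unfold Boule in Hy; simpl in Hy. apply Rabs_def2 in Hy.
 assert (Hy0 : 0 < y) by lra.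
 assert (Hlo := Gamma_lo y Hy0 n). assert (Hhi := Gamma_hi y Hy0 n).
 assert (Hg1 := Gamma_hi y Hy0 0). rewrite gs_1 in Hg1 by auto. simpl (INR 1) in Hg1. rewrite Rdiv_1_r in Hg1.
 assert (HGU : Gamma y <= U).
 { apply Rle_trans with (/ (y * (y + 1)) * exp (CC y)); auto.
   unfold U. unfold Rdiv. rewrite Rmult_comm. apply Rmult_le_compat.
   - left; apply exp_pos.
   - left; apply Rinv_0_lt_compat; nra.
   - apply exp_le_mono, CC_mono; lra.
   - apply Rinv_le_contravar; nra. }
 assert (HSn : INR N <= INR (S n)) by (apply le_INR; lia).
 assert (Hmax1 := Rmax_l (2 * C1) (2 * U * C1 / e)). assert (Hmax2 := Rmax_r (2 * C1) (2 * U * C1 / e)).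
 assert (HS : 0 < INR (S n)) by apply INR_S_pos.
 set (t := CC y / INR (S n)) in *.
 assert (Ht0 : 0 <= t) by (unfold t; apply Rdiv_le_0_compat; [unfold CC; nra| auto]).
 assert (Ht1 : t <= C1 / INR (S n)).
 { unfold t, Rdiv. apply Rmult_le_compat_r. left; apply Rinv_0_lt_compat; auto. apply CC_mono; lra. }
 assert (Ht2 : C1 / INR (S n) <= / 2).
 { apply Rmult_le_reg_r with (INR (S n)); auto. unfold Rdiv. rewrite Rmult_assoc, Rinv_l by lra. lra. }
 assert (Hexp := exp_small t ltac:(lra)).
 assert (Hgs := gs_pos y (S n) Hy0).
 rewrite Rabs_right by lra.
 (* gs <= Gamma <= gs * exp t <= gs (1 + 2t) *)
 assert (Gamma y - gauss_seq y (S n) <= gauss_seq y (S n) * (2 * t)) by nra.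
 assert (gauss_seq y (S n) * (2 * t) <= U * (2 * (C1 / INR (S n)))) by (apply Rmult_le_compat; lra).
 assert (U * (2 * (C1 / INR (S n))) < e).
 { assert (2 * U * C1 / e < INR (S n)) by lra.
   apply Rmult_lt_compat_r with (r := e) in H1; auto. unfold Rdiv in H1. rewrite Rmult_assoc, Rinv_l, Rmult_1_r in H1 by lra.
   apply Rmult_lt_reg_r with (INR (S n)); auto. unfold Rdiv. replace (U * (2 * (C1 * / INR (S n))) * INR (S n)) with (2 * U * C1 * (INR (S n) * / INR (S n))) by ring.
   rewrite Rinv_r by lra. lra. }
 lra.
Qed.

Lemma Gamma_seq (u : nat -> R) z : 0 < z -> Un_cv u z -> Un_cv (fun n => Gamma (u n)) (Gamma z).
Proof. intros. apply continuity_seq; auto. apply Gamma_cont; auto. Qed.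

Section Ratio.
Variables a rho : R.
Hypothesis Ha : 0 < a.
Hypothesis Hr : 0 < rho.

Definition rr (x : R) := Gamma x / Gamma (x + a).

Lemma rr_S x : 0 < x -> rr (x + 1) = rr x * (x / (x + a)).
Proof. intros Hx. unfold rr. replace (x + 1 + a) with ((x + a) + 1) by ring.
 rewrite !Gamma_S by lra. assert (0 < Gamma x) by (apply Gamma_pos; lra). assert (0 < Gamma (x+a)) by (apply Gamma_pos; lra).
 field. lra. Qed.

Definition R0 := exp (CC (rho + 1)) / (rho * (rho + 1)) * ((rho + a + 1) * (rho + a + 2)).
Definition qq (N : nat) := prodR (fun i => (rho + 1 + INR i) / (rho + 1 + a + INR i)) N.

Lemma rr_base y : rho <= y <= rho + 1 -> rr y <= R0.
Proof. intros Hy. unfold rr, R0.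
 assert (Hy0 : 0 < y) by lra.
 assert (H1 := Gamma_hi y Hy0 0). rewrite gs_1 in H1 by auto. simpl (INR 1) in H1. rewrite Rdiv_1_r in H1.
 assert (H2 := Gamma_lo (y + a) ltac:(lra) 0). rewrite gs_1 in H2 by lra.
 assert (G1 : 0 < Gamma (y + a)) by (apply Gamma_pos; lra).
 assert (E1 : / (y * (y + 1)) * exp (CC y) <= exp (CC (rho + 1)) / (rho * (rho + 1))).
 { unfold Rdiv. rewrite Rmult_comm. apply Rmult_le_compat.
   - left; apply exp_pos.
   - left; apply Rinv_0_lt_compat; nra.
   - apply exp_le_mono, CC_mono; lra.
   - apply Rinv_le_contravar; nra. }
 assert (E2 : / Gamma (y + a) <= (rho + a + 1) * (rho + a + 2)).
 { apply Rle_trans with ((y + a) * (y + a + 1)).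
   - rewrite <- (Rinv_inv ((y + a) * (y + a + 1))). apply Rinv_le_contravar; auto. apply Rinv_0_lt_compat; nra.
   - apply Rmult_le_compat; lra. }
 unfold Rdiv at 1. apply Rmult_le_compat; try lra.
 - left; apply Gamma_pos; lra.
 - left; apply Rinv_0_lt_compat; auto. Qed.

Lemma rr_N N y : rho + INR N <= y <= rho + INR N + 1 -> rr y <= R0 * qq N.
Proof. revert y. induction N; intros y Hy.
 - unfold qq; simpl in *. rewrite Rmult_1_r. apply rr_base. lra.
 - rewrite S_INR in Hy. replace y with ((y - 1) + 1) by ring.
   assert (0 <= INR N) by apply pos_INR.
   rewrite rr_S by lra. unfold qq. simpl prodR. fold (qq N).
   assert (IH := IHN (y - 1) ltac:(lra)).
   assert (0 <= rr (y - 1)). { unfold rr. apply Rdiv_le_0_compat; [left; apply Gamma_pos| apply Gamma_pos]; lra. }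
   rewrite <- Rmult_assoc. apply Rmult_le_compat; auto.
   + apply Rdiv_le_0_compat; lra.
   + apply Rmult_le_reg_r with ((y - 1 + a) * (rho + 1 + a + INR N)); [nra|].
     replace ((y - 1) / (y - 1 + a) * ((y - 1 + a) * (rho + 1 + a + INR N))) with ((y-1) * (rho + 1 + a + INR N)) by (field; lra).
     replace ((rho + 1 + INR N) / (rho + 1 + a + INR N) * ((y - 1 + a) * (rho + 1 + a + INR N))) with ((rho + 1 + INR N) * (y - 1 + a)) by (field; lra).
     nra. Qed.

Lemma qq_bound N : qq N <= exp (- a * (ln (rho + 1 + a + INR N) - ln (rho + 1 + a))).
Proof. induction N.
 - unfold qq; simpl. rewrite Rplus_0_r, Rminus_diag, Rmult_0_r, exp_0. lra.
 - unfold qq; simpl prodR. fold (qq N). set (w := rho + 1 + a + INR N).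
   assert (0 <= INR N) by apply pos_INR. assert (Hw : 0 < w) by (unfold w; lra).
   assert (0 <= qq N). { unfold qq. left; apply prodR_pos. intros. assert (0 <= INR i) by apply pos_INR. apply Rdiv_lt_0_compat; lra. }
   assert (E1 : (rho + 1 + INR N) / w <= exp (- (a / w))).
   { assert (H1 := exp_ineq1_le (- (a / w))). replace ((rho + 1 + INR N) / w) with (1 + - (a / w)) by (unfold w; field; lra). lra. }
   destruct (ln_succ_bounds w Hw) as [_ L2].
   apply Rle_trans with (exp (- a * (ln w - ln (rho + 1 + a))) * exp (- (a / w))).
   + apply Rmult_le_compat; auto. apply Rdiv_le_0_compat; lra.
   + rewrite <- exp_plus. apply exp_le_mono. rewrite S_INR.
     replace (rho + 1 + a + (INR N + 1)) with (w + 1) by (unfold w; ring).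
     assert (a * (ln (w + 1) - ln w) <= a / w) by (unfold Rdiv; apply Rmult_le_compat_l; lra). lra. Qed.

Lemma rho_floor x : rho <= x -> exists N : nat, rho + INR N <= x <= rho + INR N + 1.
Proof. intros Hx. destruct (exists_nat_gt (x - rho)) as [M HM].
 revert x Hx HM. induction M; intros x Hx HM; [simpl in HM; lra|].
 rewrite S_INR in HM. destruct (Rlt_dec (x - rho) (INR M)).
 - apply IHM; auto.
 - exists M. lra. Qed.

Lemma rr_small e : 0 < e -> exists X0, forall x, X0 <= x -> rr x < e.
Proof. intros He.
 set (c := rho + 1 + a). assert (Hc : 0 < c) by (unfold c; lra).
 assert (HR0 : 0 < R0). { unfold R0. apply Rmult_lt_0_compat; [apply Rdiv_lt_0_compat; [apply exp_pos| nra]| nra]. }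
 set (T := (ln (R0 / e) + a * ln c) / a).
 destruct (exists_nat_gt (exp T)) as [N0 HN0].
 exists (rho + INR N0 + 1). intros x Hx.
 assert (0 <= INR N0) by apply pos_INR.
 destruct (rho_floor x ltac:(lra)) as [N HN].
 assert (HNN : (N0 <= N)%nat). { apply INR_le. lra. }
 apply Rle_lt_trans with (R0 * qq N). { apply rr_N; auto. }
 apply Rle_lt_trans with (R0 * exp (- a * (ln (c + INR N) - ln c))).
 { apply Rmult_le_compat_l; [lra|]. apply qq_bound. }
 assert (HT : T < ln (c + INR N)).
 { assert (INR N0 <= INR N) by (apply le_INR; auto). rewrite <- (ln_exp T). apply ln_increasing. apply exp_pos. lra. }
 assert (E : - a * (ln (c + INR N) - ln c) < ln (e / R0)).
 { unfold T in HT. apply Rmult_lt_compat_l with (r := a) in HT; auto.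
   replace (a * ((ln (R0 / e) + a * ln c) / a)) with (ln (R0 / e) + a * ln c) in HT by (field; lra).
   rewrite ln_div in HT by lra. rewrite ln_div by lra. lra. }
 apply exp_increasing in E. rewrite exp_ln in E by (apply Rdiv_lt_0_compat; auto).
 apply Rmult_lt_compat_l with (r := R0) in E; auto.
 replace (R0 * (e / R0)) with e in E by (field; lra). exact E.
Qed.
End Ratio.

Lemma pred_ext {Omega : Type} (A B : Omega -> Prop) : (forall w, A w <-> B w) -> A = B.
Proof. intros H. apply functional_extensionality. intros w. apply propositional_extensionality. auto. Qed.

Lemma sum_f_R0_const c n : sum_f_R0 (fun _ => c) n = INR (S n) * c.
Proof. induction n; simpl sum_f_R0. simpl; ring. rewrite IHn. rewrite (S_INR (S n)). ring. Qed.

Section Prob.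
Variable Omega : Type.
Variable F : (Omega -> Prop) -> Prop.
Variable P : (Omega -> Prop) -> R.
Hypothesis HP : is_prob_space Omega F P.

Lemma F_True : F (fun _ => True).
Proof. destruct HP as [H _]. exact H. Qed.
Lemma F_not A : F A -> F (fun w => ~ A w).
Proof. destruct HP as [_ [H _]]. apply H. Qed.
Lemma F_ex (A : nat -> Omega -> Prop) : (forall n, F (A n)) -> F (fun w => exists n, A n w).
Proof. destruct HP as [_ [_ [H _]]]. apply H. Qed.
Lemma P_nonneg A : F A -> 0 <= P A.
Proof. destruct HP as [_ [_ [_ [H _]]]]. apply H. Qed.
Lemma P_True : P (fun _ => True) = 1.
Proof. destruct HP as [_ [_ [_ [_ [H _]]]]]. apply H. Qed.
Lemma P_ctbl (A : nat -> Omega -> Prop) : (forall n, F (A n)) ->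
  (forall i j w, i <> j -> A i w -> A j w -> False) ->
  infinite_sum (fun n => P (A n)) (P (fun w => exists n, A n w)).
Proof. destruct HP as [_ [_ [_ [_ [_ H]]]]]. apply H. Qed.

Lemma F_False : F (fun _ => False).
Proof. replace (fun _ : Omega => False) with (fun w : Omega => ~ True) by (apply pred_ext; tauto). apply F_not, F_True. Qed.

Definition two (A B : Omega -> Prop) (n : nat) : Omega -> Prop :=
  match n with O => A | S O => B | _ => fun _ => False end.

Lemma F_or A B : F A -> F B -> F (fun w => A w \/ B w).
Proof. intros HA HB. replace (fun w => A w \/ B w) with (fun w => exists n, two A B n w).
 - apply F_ex. intros [|[|n]]; simpl; auto. apply F_False.
 - apply pred_ext. intros w; split. intros [[|[|n]] H]; simpl in H; tauto.
   intros [H|H]; [exists O| exists (S O)]; simpl; auto. Qed.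

Lemma F_and A B : F A -> F B -> F (fun w => A w /\ B w).
Proof. intros HA HB. replace (fun w => A w /\ B w) with (fun w => ~ (~ A w \/ ~ B w)).
 - apply F_not, F_or; apply F_not; auto.
 - apply pred_ext. intros w. tauto. Qed.

Lemma F_all (A : nat -> Omega -> Prop) : (forall n, F (A n)) -> F (fun w => forall n, A n w).
Proof. intros H. replace (fun w => forall n, A n w) with (fun w => ~ exists n, ~ A n w).
 - apply F_not, F_ex. intros; apply F_not; auto.
 - apply pred_ext. intros w. split; intros H1. intros n. apply NNPP. intros H2. apply H1; eauto.
   intros [n Hn]; auto. Qed.

Lemma F_ext A B : F A -> (forall w, A w <-> B w) -> F B.
Proof. intros H E. rewrite <- (pred_ext _ _ E). auto. Qed.

Lemma P_ext A B : (forall w, A w <-> B w) -> P A = P B.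
Proof. intros E. rewrite (pred_ext _ _ E). auto. Qed.

Lemma P_empty : P (fun _ => False) = 0.
Proof.
 assert (H := P_ctbl (fun _ => fun _ => False) (fun _ => F_False) ltac:(intros; auto)).
 cbv beta in H.
 rewrite (P_ext (fun w => exists n : nat, False) (fun _ => False)) in H by (intros w; split; [intros [_ []]| tauto]).
 set (p := P (fun _ => False)) in *.
 assert (Hp : 0 <= p) by (apply P_nonneg, F_False).
 destruct Hp as [Hp|Hp]; auto. exfalso.
 destruct (H p Hp) as [N HN]. specialize (HN (S N) ltac:(lia)). rewrite sum_f_R0_const in HN.
 unfold R_dist in HN. rewrite (S_INR (S N)), S_INR in HN. assert (0 <= INR N) by apply pos_INR.
 rewrite Rabs_right in HN by nra. nra. Qed.

Lemma P_add A B : F A -> F B -> (forall w, A w -> B w -> False) -> P (fun w => A w \/ B w) = P A + P B.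
Proof. intros HA HB Hd.
 assert (H := P_ctbl (two A B) ltac:(intros [|[|n]]; simpl; auto; apply F_False)
   ltac:(intros [|[|i]] [|[|j]] w Hij; simpl; try tauto; try lia; intros; eauto)).
 rewrite (P_ext (fun w => exists n, two A B n w) (fun w => A w \/ B w)) in H.
 2:{ intros w; split. intros [[|[|n]] H']; simpl in H'; tauto. intros [H'|H']; [exists O| exists (S O)]; simpl; auto. }
 apply (uniqueness_sum _ _ _ H). intros e He. exists 1%nat. intros n Hn.
 assert (E : sum_f_R0 (fun n => P (two A B n)) n = P A + P B).
 { induction n; [lia|]. destruct n. simpl. ring. simpl sum_f_R0 in *. rewrite IHn by lia. simpl. rewrite P_empty. ring. }
 rewrite E. unfold R_dist. rewrite Rminus_diag, Rabs_R0. lra. Qed.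

Lemma P_compl A : F A -> P (fun w => ~ A w) = 1 - P A.
Proof. intros HA. rewrite <- P_True.
 rewrite (P_ext (fun _ => True) (fun w => A w \/ ~ A w)) by (intros; tauto).
 rewrite P_add; auto. ring. apply F_not; auto. Qed.

Lemma P_mono A B : F A -> F B -> (forall w, A w -> B w) -> P A <= P B.
Proof. intros HA HB Hs.
 rewrite (P_ext B (fun w => A w \/ (B w /\ ~ A w))) by (intros w; split; [intros; tauto| intros [H|H]; auto; tauto]).
 rewrite P_add; auto. assert (0 <= P (fun w => B w /\ ~ A w)) by (apply P_nonneg, F_and; auto; apply F_not; auto). lra.
 apply F_and; auto; apply F_not; auto. intros w H1 [_ H2]; auto. Qed.

Lemma P_le1 A : F A -> P A <= 1.
Proof. intros. rewrite <- P_True. apply P_mono; auto. apply F_True. Qed.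

Lemma P_diff A B : F A -> F B -> (forall w, A w -> B w) -> P (fun w => B w /\ ~ A w) = P B - P A.
Proof. intros HA HB Hs.
 rewrite (P_ext B (fun w => A w \/ (B w /\ ~ A w))) by (intros w; split; [intros; tauto| intros [H|H]; auto; tauto]).
 rewrite P_add; auto. ring. apply F_and; auto; apply F_not; auto. intros w H1 [_ H2]; auto. Qed.

Lemma cont_below (A : nat -> Omega -> Prop) : (forall n, F (A n)) -> (forall n w, A n w -> A (S n) w) ->
  Un_cv (fun n => P (A n)) (P (fun w => exists n, A n w)).
Proof. intros HF Hm.
 assert (Hmono : forall i j w, (i <= j)%nat -> A i w -> A j w). { intros i j w Hij. induction Hij; auto. }
 set (D := fun n => match n with O => A O | S m => fun w => A (S m) w /\ ~ A m w end).
 assert (HD : forall n, F (D n)). { intros [|n]; simpl; auto. apply F_and; auto. apply F_not; auto. }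
 assert (Hdis : forall i j w, i <> j -> D i w -> D j w -> False).
 { assert (Hlt : forall i j w, (i < j)%nat -> D i w -> D j w -> False).
   { intros i j w Hij Hi Hj. destruct j; [lia|]. simpl in Hj. destruct Hj as [_ Hj]. apply Hj.
     apply (Hmono i); [lia|]. destruct i; simpl in Hi; tauto. }
   intros i j w Hij Hi Hj. destruct (Nat.lt_gt_cases i j) as [[H|H] _]; auto; eauto. }
 assert (H := P_ctbl D HD Hdis).
 rewrite (P_ext (fun w => exists n, D n w) (fun w => exists n, A n w)) in H.
 2:{ intros w; split. intros [[|n] Hn]; simpl in Hn. eauto. exists (S n); tauto.
     intros [n Hn]. induction n. exists O; auto. destruct (classic (A n w)); auto. exists (S n); simpl; auto. }
 assert (E : forall n, sum_f_R0 (fun n => P (D n)) n = P (A n)).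
 { induction n; simpl; auto. rewrite IHn.
   rewrite (P_ext (A (S n)) (fun w => A n w \/ (A (S n) w /\ ~ A n w))) by (intros w; split; [tauto| intros [H1|H1]; auto; tauto]).
   rewrite P_add; auto. apply F_and; auto. apply F_not; auto. intros w H1 [_ H2]; auto. }
 intros e He. destruct (H e He) as [N HN]. exists N. intros n Hn. rewrite <- E. apply HN; auto. Qed.

Lemma cont_above (A : nat -> Omega -> Prop) : (forall n, F (A n)) -> (forall n w, A (S n) w -> A n w) ->
  Un_cv (fun n => P (A n)) (P (fun w => forall n, A n w)).
Proof. intros HF Hm.
 assert (H := cont_below (fun n w => ~ A n w) ltac:(intros; apply F_not; auto) ltac:(intros n w H1 H2; apply H1; auto)).
 assert (E : P (fun w => exists n, ~ A n w) = 1 - P (fun w => forall n, A n w)).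
 { rewrite <- P_compl by (apply F_all; auto). apply P_ext. intros w; split.
   intros [n Hn] H'; auto. intros H'. apply NNPP; intros H2. apply H'. intros n. apply NNPP; intros H3. apply H2; eauto. }
 cbv beta in H. rewrite E in H.
 assert (H2 : Un_cv (fun n => 1 - (1 - P (A n))) (1 - (1 - P (fun w => forall n, A n w)))).
 { apply CV_minus. apply cv_const. eapply cv_ext; [|exact H]. intros; simpl. rewrite P_compl; auto. }
 replace (1 - (1 - P (fun w => forall n, A n w))) with (P (fun w => forall n, A n w)) in H2 by ring.
 eapply cv_ext; [|exact H2]. intros; simpl; ring. Qed.

Lemma F_fin (E : nat -> Omega -> Prop) N : (forall t, F (E t)) -> F (fun w => exists t, (t < N)%nat /\ E t w).
Proof. intros HE. induction N.
 - apply (F_ext _ _ F_False). intros w; split; [tauto| intros [t [Ht _]]; lia].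
 - apply (F_ext _ _ (F_or _ _ IHN (HE N))). intros w; split.
   + intros [[t [Ht H]]|H]; exists t || exists N; split; auto; lia.
   + intros [t [Ht H]]. destruct (Nat.eq_dec t N). subst; auto. left; exists t; split; auto; lia. Qed.

Lemma P_fin (E : nat -> Omega -> Prop) N : (forall t, F (E t)) -> (forall t t' w, t <> t' -> E t w -> E t' w -> False) ->
  P (fun w => exists t, (t < N)%nat /\ E t w) = sumR (fun t => P (E t)) N.
Proof. intros HE Hd. induction N.
 - simpl. rewrite <- P_empty. apply P_ext. intros w; split; [intros [t [Ht _]]; lia| tauto].
 - simpl. rewrite <- IHN. rewrite <- P_add; auto.
   + apply P_ext. intros w; split.
     * intros [t [Ht H]]. destruct (Nat.eq_dec t N). subst; auto. left; exists t; split; auto; lia.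
     * intros [[t [Ht H]]|H]; [exists t| exists N]; split; auto; lia.
   + apply F_fin; auto.
   + intros w [t [Ht H1]] H2. apply (Hd t N w); auto; lia. Qed.

End Prob.

Lemma poch_pos u j : 0 < u -> 0 < poch u j.
Proof. intros. apply prodx_pos; auto. Qed.
Lemma poch_ratio_le K m c j : 0 < K -> K <= m -> 0 < c -> poch K j / poch (c + K) j <= poch m j / poch (c + m) j.
Proof. intros. unfold poch. rewrite !prodR_div.
 2,3: intros; assert (0 <= INR i) by apply pos_INR; lra.
 apply prodR_le. intros i Hi. assert (0 <= INR i) by apply pos_INR. split.
 - apply Rdiv_le_0_compat; lra.
 - apply Rmult_le_reg_r with ((c + K + INR i) * (c + m + INR i)); [nra|].
   replace ((K + INR i) / (c + K + INR i) * ((c + K + INR i) * (c + m + INR i))) with ((K + INR i) * (c + m + INR i)) by (field; lra).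
   replace ((m + INR i) / (c + m + INR i) * ((c + K + INR i) * (c + m + INR i))) with ((m + INR i) * (c + K + INR i)) by (field; lra).
   nra. Qed.

Lemma poch_ratio_le1 K c j : 0 < K -> 0 < c -> poch K j / poch (c + K) j <= 1.
Proof. intros. unfold poch. rewrite prodR_div.
 2: intros; assert (0 <= INR i) by apply pos_INR; lra.
 replace 1 with (prodR (fun _ => 1) j) by (induction j; simpl; [auto| rewrite IHj; ring]).
 apply prodR_le. intros i Hi. assert (0 <= INR i) by apply pos_INR. split.
 - apply Rdiv_le_0_compat; lra.
 - apply Rmult_le_reg_r with (c + K + INR i); [lra|]. unfold Rdiv. rewrite Rmult_assoc, Rinv_l by lra. lra. Qed.

Lemma cv_poch (u : nat -> R) l j : Un_cv u l -> Un_cv (fun n => poch (u n) j) (poch l j).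
Proof. intros H. induction j; unfold poch; simpl.
 - apply cv_const.
 - apply CV_mult; auto. apply CV_plus; auto. apply cv_const. Qed.

Lemma cv_sumR (G : nat -> nat -> R) (l : nat -> R) N : (forall j, Un_cv (fun n => G n j) (l j)) ->
  Un_cv (fun n => sumR (G n) N) (sumR l N).
Proof. intros H. induction N; simpl.
 - apply cv_const.
 - apply CV_plus; auto. Qed.

Lemma dom_diff (f g : nat -> R) lam B B' : (forall j, f j <= lam * g j) -> (B <= B')%nat ->
  sumR f B' - sumR f B <= lam * (sumR g B' - sumR g B).
Proof. intros H Hb. induction Hb. lra. simpl. specialize (H m). lra. Qed.

Lemma sumR_S_sum f n : sumR f (S n) = sum_f_R0 f n.
Proof. induction n. simpl; ring. simpl sumR in *. simpl sum_f_R0. rewrite <- IHn. simpl. ring. Qed.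

Lemma GWD_form a rho K j : 0 < a -> 0 < rho -> 0 < K ->
  GWD_pmf a K rho j = rising rho K / rising (rho + a) K * (poch a j * (poch K j / poch (rho + a + K) j)) / INR (fact j).
Proof. intros. unfold GWD_pmf. rewrite !rising_poch by lra. unfold Rdiv. ring. Qed.

Lemma f_pos a rho K : 0 < a -> 0 < rho -> 0 < K -> 0 < rising rho K / rising (rho + a) K.
Proof. intros. unfold rising. assert (0 < Gamma rho) by (apply Gamma_pos; lra). assert (0 < Gamma (rho + K)) by (apply Gamma_pos; lra).
 assert (0 < Gamma (rho + a)) by (apply Gamma_pos; lra). assert (0 < Gamma (rho + a + K)) by (apply Gamma_pos; lra).
 apply Rdiv_lt_0_compat; apply Rdiv_lt_0_compat; auto. Qed.

Lemma f_cv a rho (u : nat -> R) m : 0 < a -> 0 < rho -> 0 < m -> Un_cv u m ->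
  Un_cv (fun n => rising rho (u n) / rising (rho + a) (u n)) (rising rho m / rising (rho + a) m).
Proof. intros Ha Hr Hm Hu. unfold rising.
 assert (H1 : Un_cv (fun n => rho + u n) (rho + m)) by (apply CV_plus; auto; apply cv_const).
 assert (H2 : Un_cv (fun n => rho + a + u n) (rho + a + m)) by (apply CV_plus; auto; apply cv_const).
 assert (0 < Gamma rho) by (apply Gamma_pos; lra). assert (0 < Gamma (rho + a)) by (apply Gamma_pos; lra).
 assert (0 < Gamma (rho + a + m)) by (apply Gamma_pos; lra).
 apply cv_div. apply cv_div. apply Gamma_seq; auto; lra. apply cv_const. lra.
 apply cv_div. apply Gamma_seq; auto; lra. apply cv_const. lra.
 apply Rgt_not_eq, Rdiv_lt_0_compat; auto. Qed.

Lemma g_cv a rho (u : nat -> R) m j : 0 < a -> 0 < rho -> 0 < m -> Un_cv u m -> (forall n, 0 < u n) ->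
  Un_cv (fun n => GWD_pmf a (u n) rho j) (GWD_pmf a m rho j).
Proof. intros Ha Hr Hm Hu Hpos.
 apply cv_ext with (fun n => rising rho (u n) / rising (rho + a) (u n) * (poch a j * (poch (u n) j / poch (rho + a + u n) j)) / INR (fact j)).
 { intros n. rewrite GWD_form; auto. }
 rewrite GWD_form by auto.
 apply cv_div; [| apply cv_const| apply Rgt_not_eq, INR_fact_pos].
 apply CV_mult. apply f_cv; auto. apply CV_mult. apply cv_const.
 apply cv_div. apply cv_poch; auto. apply cv_poch. apply CV_plus; auto. apply cv_const.
 apply Rgt_not_eq, poch_pos; lra. Qed.

Lemma nat_evconst (u : nat -> nat) B : (forall n, (u n <= u (S n))%nat) -> (forall n, (u n <= B)%nat) ->
  exists s N, forall n, (N <= n)%nat -> u n = s.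
Proof. intros Hm Hb.
 assert (Hmono : forall n m, (n <= m)%nat -> (u n <= u m)%nat). { intros n m H. induction H; auto. specialize (Hm m); lia. }
 assert (Hd : forall d n0, (forall n, (u n <= u n0 + d)%nat) -> exists s N, forall n, (N <= n)%nat -> u n = s).
 { induction d; intros n0 H.
   - exists (u n0), n0. intros n Hn. specialize (H n). specialize (Hmono _ _ Hn). lia.
   - destruct (classic (exists n1, (u n0 < u n1)%nat)) as [[n1 Hn1]|Hno].
     + apply (IHd n1). intros n. specialize (H n). lia.
     + exists (u n0), n0. intros n Hn. specialize (Hmono _ _ Hn). assert (~ (u n0 < u n)%nat) by eauto. lia. }
 apply (Hd B O). intros n. specialize (Hb n). lia. Qed.

Definition dep (N : nat) (Q : (nat -> nat) -> Prop) := forall f g, (forall i, (i < N)%nat -> f i = g i) -> Q f -> Q g.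
Definition upd (f : nat -> nat) (n t : nat) : nat -> nat := fun i => if Nat.eqb i n then t else f i.

Lemma upd_lt f n t i : (i < n)%nat -> upd f n t i = f i.
Proof. intros. unfold upd. destruct (Nat.eqb_spec i n); [lia| auto]. Qed.
Lemma upd_eq f n t : upd f n t n = t.
Proof. unfold upd. rewrite Nat.eqb_refl. auto. Qed.


Lemma cc_zero j : cc 0 (S j) = 0.
Proof. unfold cc, poch. rewrite prodR_shift. simpl (INR 0). rewrite Rplus_0_r, Rmult_0_l. unfold Rdiv; ring. Qed.

Lemma sumR_pos (f : nat -> R) n : (forall i, 0 < f i) -> (1 <= n)%nat -> 0 < sumR f n.
Proof. intros Hf Hn. induction Hn; simpl. rewrite Rplus_0_l; auto. specialize (Hf m); lra. Qed.

Section Dist.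
Variable Omega : Type.
Variable F : (Omega -> Prop) -> Prop.
Variable P : (Omega -> Prop) -> R.
Hypothesis HP : is_prob_space Omega F P.
Variable X : nat -> Omega -> nat.
Hypothesis HX : forall j n, F (fun w => X j w = n).
Variables a rho : R.
Variable k : nat -> R.
Hypothesis Ha : 0 < a.
Hypothesis Hr : 0 < rho.
Hypothesis Hk : forall j, 0 < k j.
Hypothesis HMG : forall (s : nat) (x : nat -> nat), (1 <= s)%nat ->
     P (fun w => forall i, (i < s)%nat -> X i w = x i) = MGWD_pmf a k s rho x.

Lemma meas N : forall Q, dep N Q -> F (fun w => Q (fun i => X i w)).
Proof. induction N; intros Q HQ.
 - destruct (classic (Q (fun _ => O))) as [H|H].
   + apply (F_ext _ F P HP _ _ (F_True _ F P HP)). intros w; split; auto. intros _. apply (HQ (fun _ => O)); auto. intros; lia.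
   + apply (F_ext _ F P HP _ _ (F_False _ F P HP)). intros w; split; [tauto|]. intros H'. apply H. apply (HQ (fun i => X i w)); auto. intros; lia.
 - assert (Ht : forall t, dep N (fun f => Q (upd f N t))).
   { intros t f g Hfg. apply HQ. intros i Hi. unfold upd. destruct (Nat.eqb_spec i N); auto. apply Hfg; lia. }
   apply (F_ext _ F P HP (fun w => exists t, X N w = t /\ Q (upd (fun i => X i w) N t))).
   + apply (F_ex _ F P HP); auto. intros t. apply (F_and _ F P HP); auto. apply (IHN (fun f => Q (upd f N t))). auto.
   + intros w; split.
     * intros [t [Ht1 Ht2]]. subst. apply (HQ (upd (fun i => X i w) N (X N w))); auto.
       intros i Hi. unfold upd. destruct (Nat.eqb_spec i N); subst; auto.
     * intros H. exists (X N w). split; auto. apply (HQ (fun i => X i w)); auto.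
       intros i Hi. unfold upd. destruct (Nat.eqb_spec i N); subst; auto.
Qed.

Definition cyl p (y : nat -> nat) w := forall i, (i < p)%nat -> X i w = y i.
Definition ps p L w := sumN (fun i => X (p + i)%nat w) L.
Definition Tev p y L j := fun w => cyl p y w /\ ps p L w = j.

Lemma F_Tev p y L j : F (Tev p y L j).
Proof. apply (meas (p + L)%nat (fun f => (forall i, (i < p)%nat -> f i = y i) /\ sumN (fun i => f (p + i)%nat) L = j)).
 intros f g Hfg [H1 H2]. split.
 - intros i Hi. rewrite <- Hfg by lia. auto.
 - rewrite <- H2. apply sumN_ext. intros. symmetry; apply Hfg; lia. Qed.

Definition M p y L j := rising rho (sumR k (p + L)%nat) * rising a (INR (sumN y p + j)%nat)
   / rising (rho + a) (sumR k (p + L)%nat + INR (sumN y p + j)%nat)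
   * prodR (fun i => rising (k i) (INR (y i)) / INR (fact (y i))) p
   * cc (sumR (fun i => k (p + i)%nat) L) j.

Lemma ps_S p L w : ps p (S L) w = (X p w + ps (p + 1) L w)%nat.
Proof. unfold ps. rewrite sumN_shift. rewrite Nat.add_0_r. f_equal. apply sumN_ext. intros. f_equal. lia. Qed.

Lemma Tev_split p y L j w : Tev p y (S L) j w <-> exists t, (t < S j)%nat /\ Tev (p + 1)%nat (upd y p t) L (j - t)%nat w.
Proof. unfold Tev, cyl. rewrite ps_S. split.
 - intros [H1 H2]. exists (X p w). split; [lia|]. split; [|lia].
   intros i Hi. unfold upd. destruct (Nat.eqb_spec i p); subst; auto. apply H1; lia.
 - intros [t [Ht [H1 H2]]]. assert (Hp : X p w = t) by (rewrite H1 by lia; apply upd_eq).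
   split; [|lia]. intros i Hi. rewrite H1 by lia. apply upd_lt; auto. Qed.

Lemma T_formula L : forall p y j, (1 <= p + L)%nat -> P (Tev p y L j) = M p y L j.
Proof. induction L; intros p y j Hp.
 - unfold M. rewrite Nat.add_0_r in *. destruct j.
   + rewrite cc_0, Rmult_1_r. rewrite Nat.add_0_r.
     rewrite (P_ext _ F P HP _ (fun w => forall i, (i < p)%nat -> X i w = y i)).
     2:{ intros w; unfold Tev, ps; simpl; tauto. }
     rewrite HMG by auto. unfold MGWD_pmf. reflexivity.
   + simpl sumR. rewrite cc_zero, Rmult_0_r.
     rewrite (P_ext _ F P HP _ (fun _ => False)). apply (P_empty _ F P HP).
     intros w; unfold Tev, ps; simpl. split; [intros [_ H]; lia| tauto].
 - rewrite (P_ext _ F P HP _ (fun w => exists t, (t < S j)%nat /\ Tev (p + 1)%nat (upd y p t) L (j - t)%nat w)) by (intros; apply Tev_split).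
   rewrite (P_fin _ F P HP).
   2:{ intros; apply F_Tev. }
   2:{ intros t t' w Hne [H1 _] [H2 _]. apply Hne. rewrite <- (upd_eq y p t), <- (upd_eq y p t').
       rewrite <- H1, <- H2 by lia. auto. }
   rewrite (sumR_ext _ (fun t => M (p + 1)%nat (upd y p t) L (j - t)%nat)) by (intros; apply IHL; lia).
   set (V := sumR (fun i => k (p + 1 + i)%nat) L).
   set (Cm := rising rho (sumR k (p + S L)%nat) * rising a (INR (sumN y p + j)%nat)
       / rising (rho + a) (sumR k (p + S L)%nat + INR (sumN y p + j)%nat)
       * prodR (fun i => rising (k i) (INR (y i)) / INR (fact (y i))) p).
   rewrite (sumR_ext _ (fun t => Cm * (cc (k p) t * cc V (j - t)%nat))).
   + rewrite sumR_scal. fold (Dv (k p) V j). rewrite vandermonde. unfold M, Cm.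
     replace (sumR (fun i => k (p + i)%nat) (S L)) with (k p + V).
     2:{ rewrite sumR_shift. rewrite Nat.add_0_r. unfold V. f_equal. apply sumR_ext. intros. f_equal. lia. }
     reflexivity.
   + intros t Ht. unfold M, Cm.
     assert (E1 : (p + 1 + L)%nat = (p + S L)%nat) by (rewrite <- Nat.add_assoc; reflexivity). rewrite E1.
     replace (sumN (upd y p t) (p + 1) + (j - t))%nat with (sumN y p + j)%nat.
     2:{ replace (p + 1)%nat with (S p) by lia. simpl. rewrite upd_eq.
         rewrite (sumN_ext (upd y p t) y p) by (intros; apply upd_lt; auto). lia. }
     replace (p + 1)%nat with (S p) by lia. simpl prodR. rewrite upd_eq.
     rewrite (prodR_ext (fun i => rising (k i) (INR (upd y p t i)) / INR (fact (upd y p t i)))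
                       (fun i => rising (k i) (INR (y i)) / INR (fact (y i)))) by (intros; rewrite upd_lt; auto).
     rewrite (rising_poch (k p) t) by auto.
     replace (sumR (fun i => k (S p + i)%nat) L) with V by (unfold V; apply sumR_ext; intros; f_equal; lia).
     unfold cc. ring.
Qed.

Lemma partial_dist n j : (1 <= n)%nat -> P (fun w => partial_sum X w n = j) = GWD_pmf a (sumR k n) rho j.
Proof. intros Hn.
 assert (HK : 0 < sumR k n) by (apply sumR_pos; auto).
 rewrite (P_ext _ F P HP _ (Tev O (fun _ => O) n j)) by (intros w; unfold Tev, cyl, ps, partial_sum; simpl; split; [intros; split; [intros; lia| auto]| tauto]).
 rewrite T_formula by lia. unfold M, GWD_pmf, cc. simpl.
 set (K := sumR k n) in *. change (sumR (fun i => k i) n) with K.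
 rewrite rising_add by lra. rewrite !rising_poch by lra.
 assert (0 < rising (rho + a) K). { unfold rising. apply Rdiv_lt_0_compat; apply Gamma_pos; lra. }
 assert (0 < poch (rho + a + K) j) by (apply poch_pos; lra).
 assert (0 < INR (fact j)) by apply INR_fact_pos.
 field. lra. Qed.


Definition Dv_ev (B : nat) := fun w => forall n, (partial_sum X w n <= B)%nat.

Lemma ps_mono w n m : (n <= m)%nat -> (partial_sum X w n <= partial_sum X w m)%nat.
Proof. intros H. induction H; auto. unfold partial_sum in *. simpl. lia. Qed.

Lemma F_le n B : F (fun w => (partial_sum X w n <= B)%nat).
Proof. apply (meas n (fun f => (sumN f n <= B)%nat)). intros f g Hfg H. rewrite <- (sumN_ext f g n); auto. Qed.

Lemma F_eqs n j : F (fun w => partial_sum X w n = j).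
Proof. apply (meas n (fun f => sumN f n = j)). intros f g Hfg H. rewrite <- (sumN_ext f g n); auto. Qed.

Lemma F_D B : F (Dv_ev B).
Proof. apply (F_all _ F P HP). intros; apply F_le. Qed.

Lemma P_le_sum n B : (1 <= n)%nat -> P (fun w => (partial_sum X w n <= B)%nat) = sumR (fun j => GWD_pmf a (sumR k n) rho j) (S B).
Proof. intros Hn.
 rewrite (P_ext _ F P HP _ (fun w => exists j, (j < S B)%nat /\ partial_sum X w n = j)).
 2:{ intros w; split. intros H; exists (partial_sum X w n); split; auto; lia. intros [j [Hj H]]; lia. }
 rewrite (P_fin _ F P HP). apply sumR_ext. intros; apply partial_dist; auto.
 intros; apply F_eqs. intros t t' w Hne H1 H2; lia. Qed.

Lemma D_lim B : Un_cv (fun n => P (fun w => (partial_sum X w (S n) <= B)%nat)) (P (Dv_ev B)).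
Proof.
 assert (H := cont_above _ F P HP (fun n w => (partial_sum X w (S n) <= B)%nat) ltac:(intros; apply F_le)
   ltac:(intros n w H; cbv beta in *; assert (H2 := ps_mono w (S n) (S (S n)) ltac:(lia)); lia)).
 cbv beta in H. rewrite (P_ext _ F P HP _ (Dv_ev B)) in H; auto.
 intros w; split; unfold Dv_ev. intros H1 [|n]; auto. unfold partial_sum; simpl; lia. intros H1 n; auto. Qed.

Lemma Seq_D w s : S_eq X w s -> Dv_ev s w.
Proof. intros [N HN] n. rewrite <- (HN (max n N)) by lia. apply ps_mono; lia. Qed.

Lemma Seq_notD w s : S_eq X w (S s) -> ~ Dv_ev s w.
Proof. intros [N HN] H. specialize (H N). rewrite HN in H; lia. Qed.

Lemma D_Seq w s : Dv_ev s w -> (s = O \/ exists s', s = S s' /\ ~ Dv_ev s' w) -> S_eq X w s.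
Proof. intros HD Hs.
 destruct (nat_evconst (fun n => partial_sum X w n) s ltac:(intros; apply ps_mono; lia) HD) as [v [N HN]].
 assert (Hv : (v <= s)%nat) by (specialize (HN N ltac:(lia)); cbv beta in HN; rewrite <- HN; apply HD).
 assert (v = s).
 { destruct Hs as [Hs|[s' [Hs Hnd]]]; [lia|]. subst s.
   destruct (Compare_dec.le_lt_dec (S s') v) as [|Hlt]; [lia|]. exfalso. apply Hnd. intros n.
   assert (H1 := ps_mono w n (max n N) ltac:(lia)). specialize (HN (max n N) ltac:(lia)). cbv beta in HN. lia. }
 subst. exists N. auto. Qed.

Lemma exS_D w : (exists s, S_eq X w s) <-> exists B, Dv_ev B w.
Proof. split.
 - intros [s Hs]. exists s. apply Seq_D; auto.
 - intros [B HB]. destruct (nat_evconst (fun n => partial_sum X w n) B ltac:(intros; apply ps_mono; lia) HB) as [v [N HN]].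
   exists v, N; auto. Qed.

Lemma D_mono B w : Dv_ev B w -> Dv_ev (S B) w.
Proof. intros H n. specialize (H n). lia. Qed.

Section Conv.
Variable m : R.
Hypothesis Hm : infinite_sum k m.

Let Kn n := sumR k (S n).

Lemma Kn_cv : Un_cv Kn m.
Proof. intros e He. destruct (Hm e He) as [N HN]. exists N. intros n Hn. unfold Kn. rewrite sumR_S_sum. apply HN; auto. Qed.

Lemma Kn_le n : Kn n <= m.
Proof. unfold Kn. rewrite sumR_S_sum. apply sum_incr. intros e He; apply Hm; auto. intros; left; apply Hk. Qed.

Lemma Kn_pos n : 0 < Kn n.
Proof. unfold Kn. apply sumR_pos; auto; lia. Qed.

Lemma m_pos : 0 < m.
Proof. assert (H1 := Kn_pos 0). assert (H2 := Kn_le 0). lra. Qed.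

Let u B := sumR (fun j => GWD_pmf a m rho j) (S B).

Lemma PD_u B : P (Dv_ev B) = u B.
Proof. apply (UL_sequence (fun n => P (fun w => (partial_sum X w (S n) <= B)%nat))). apply D_lim.
 eapply cv_ext. intros n. symmetry. apply P_le_sum. lia.
 apply cv_sumR. intros j. apply g_cv; auto. apply m_pos. apply Kn_cv. apply Kn_pos. Qed.

Lemma conv_dist s : P (fun w => S_eq X w s) = GWD_pmf a m rho s.
Proof. destruct s.
 - rewrite (P_ext _ F P HP _ (Dv_ev 0)). rewrite PD_u. unfold u; simpl; ring.
   intros w; split. apply Seq_D. intros H; apply D_Seq; auto.
 - rewrite (P_ext _ F P HP _ (fun w => Dv_ev (S s) w /\ ~ Dv_ev s w)).
   + rewrite (P_diff _ F P HP); try apply F_D. rewrite !PD_u. unfold u. simpl sumR. ring. apply D_mono.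
   + intros w; split. intros H; split. apply Seq_D; auto. apply Seq_notD; auto.
     intros [H1 H2]. apply D_Seq; auto. right; eauto.
Qed.

Lemma conv_total : P (fun w => exists s, S_eq X w s) = 1.
Proof.
 rewrite (P_ext _ F P HP _ (fun w => exists B, Dv_ev B w)) by apply exS_D.
 set (T := P (fun w => exists B, Dv_ev B w)).
 assert (HT1 : T <= 1) by (apply (P_le1 _ F P HP); apply (F_ex _ F P HP); apply F_D).
 assert (HuT : forall B, u B <= T).
 { intros B. rewrite <- PD_u. apply (P_mono _ F P HP). apply F_D. apply (F_ex _ F P HP); apply F_D. eauto. }
 assert (Hcvu : Un_cv u T).
 { assert (H := cont_below _ F P HP Dv_ev F_D ltac:(intros; apply D_mono; auto)).
   eapply cv_ext; [|exact H]. intros; apply PD_u. }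
 set (fK := fun K => rising rho K / rising (rho + a) K).
 assert (Hfm : 0 < fK m) by (apply f_pos; auto; apply m_pos).
 set (lam := fun n => fK (Kn n) / fK m).
 assert (Hdom : forall n j, GWD_pmf a (Kn n) rho j <= lam n * GWD_pmf a m rho j).
 { intros n j. assert (HK := Kn_pos n). assert (HKm := Kn_le n). rewrite !GWD_form by (auto; apply m_pos).
   unfold lam. fold (fK (Kn n)) (fK m).
   assert (0 < fK (Kn n)) by (apply f_pos; auto).
   replace (fK (Kn n) / fK m * (fK m * (poch a j * (poch m j / poch (rho + a + m) j)) / INR (fact j)))
     with (fK (Kn n) * (poch a j * (poch m j / poch (rho + a + m) j)) / INR (fact j)).
   2:{ assert (0 < INR (fact j)) by apply INR_fact_pos. assert (0 < poch (rho + a + m) j) by (apply poch_pos; assert (0 < m) by apply m_pos; lra).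
       field; repeat split; lra. }
   unfold Rdiv at 1 3. apply Rmult_le_compat_r. left; apply Rinv_0_lt_compat, INR_fact_pos.
   apply Rmult_le_compat_l; [lra|]. apply Rmult_le_compat_l. left; apply poch_pos; auto.
   apply poch_ratio_le; auto; lra. }
 assert (Hlam : forall n, 0 <= lam n).
 { intros. unfold lam. apply Rdiv_le_0_compat; [left; apply f_pos; auto; apply Kn_pos| auto]. }
 assert (Hkey : forall n B, 1 - P (fun w => (partial_sum X w (S n) <= B)%nat) <= lam n * (T - u B)).
 { intros n B.
   assert (Hc := cont_below _ F P HP (fun B' w => (partial_sum X w (S n) <= B')%nat) ltac:(intros; apply F_le) ltac:(intros; cbv beta in *; lia)).
   cbv beta in Hc. rewrite (P_ext _ F P HP _ (fun _ => True)) in Hc by (intros w; split; auto; intros; exists (partial_sum X w (S n)); lia).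
   rewrite (P_True _ F P HP) in Hc.
   assert (Hc2 : Un_cv (fun B' => P (fun w => (partial_sum X w (S n) <= B')%nat) - P (fun w => (partial_sum X w (S n) <= B)%nat))
                   (1 - P (fun w => (partial_sum X w (S n) <= B)%nat))) by (apply CV_minus; auto; apply cv_const).
   apply (lim_le_ev _ _ _ B Hc2). intros B' HB'.
   rewrite !P_le_sum by lia. fold (Kn n).
   apply Rle_trans with (lam n * (u B' - u B)).
   - unfold u. apply dom_diff; auto. lia.
   - apply Rmult_le_compat_l; auto. specialize (HuT B'). lra. }
 assert (HT : 1 <= T).
 { assert (Hlc : Un_cv lam 1).
   { unfold lam. replace 1 with (fK m / fK m) by (field; lra). apply cv_div; [| apply cv_const| lra].
     unfold fK. apply f_cv; auto. apply m_pos. apply Kn_cv. }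
   assert (Hl : forall B, 1 - u B <= T - u B).
   { intros B. apply (Rle_cv_lim (fun n => Hkey n B)).
     - apply CV_minus. apply cv_const. rewrite <- PD_u. apply D_lim.
     - assert (Hx : Un_cv (fun n => lam n * (T - u B)) (1 * (T - u B))) by (apply CV_mult; auto; apply cv_const).
       rewrite Rmult_1_l in Hx. exact Hx. }
   specialize (Hl O). lra. }
 lra.
Qed.

End Conv.

Lemma div_case : cv_infty (sum_f_R0 k) -> P (fun w => S_inf X w) = 1.
Proof. intros Hinf.
 assert (HD0 : forall B, P (Dv_ev B) = 0).
 { intros B. set (W := sumR (fun j => poch a j / INR (fact j)) (S B) * (Gamma (rho + a) / Gamma rho)).
   assert (HW : 0 <= W).
   { assert (Hs0 : forall n, sumR (fun _ => 0) n = 0) by (induction n; simpl; lra).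
     unfold W. apply Rmult_le_pos.
     - rewrite <- (Hs0 (S B)). apply sumR_le. intros; apply Rdiv_le_0_compat; [left; apply poch_pos; auto| apply INR_fact_pos].
     - apply Rdiv_le_0_compat; [left; apply Gamma_pos; lra| apply Gamma_pos; lra]. }
   assert (H0 : 0 <= P (Dv_ev B)) by (apply (P_nonneg _ F P HP), F_D).
   destruct H0 as [H0|H0]; auto. exfalso.
   set (e := P (Dv_ev B) / (W + 1)).
   assert (He : 0 < e) by (unfold e; apply Rdiv_lt_0_compat; lra).
   destruct (rr_small a rho Ha Hr e He) as [X0 HX0].
   destruct (Hinf (X0 - rho)) as [N HN].
   specialize (HN N ltac:(lia)). rewrite <- sumR_S_sum in HN.
   set (K := sumR k (S N)) in *.
   assert (HK : 0 < K) by (apply sumR_pos; auto; lia).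
   assert (Hrr := HX0 (rho + K) ltac:(lra)).
   assert (H1 : P (Dv_ev B) <= P (fun w => (partial_sum X w (S N) <= B)%nat)).
   { apply (P_mono _ F P HP). apply F_D. apply F_le. intros w H; apply H. }
   rewrite P_le_sum in H1 by lia. fold K in H1.
   assert (H2 : sumR (fun j => GWD_pmf a K rho j) (S B) <= rr a (rho + K) * W).
   { replace (rr a (rho + K) * W) with (sumR (fun j => (rr a (rho + K) * (Gamma (rho + a) / Gamma rho)) * (poch a j / INR (fact j))) (S B))
       by (unfold W; rewrite sumR_scal; ring).
     apply sumR_le. intros j _. rewrite GWD_form by auto.
     assert (Ef : rising rho K / rising (rho + a) K = rr a (rho + K) * (Gamma (rho + a) / Gamma rho)).
     { unfold rising, rr. replace (rho + K + a) with (rho + a + K) by ring.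
       assert (0 < Gamma rho) by (apply Gamma_pos; lra). assert (0 < Gamma (rho + a)) by (apply Gamma_pos; lra).
       assert (0 < Gamma (rho + a + K)) by (apply Gamma_pos; lra). field; lra. }
     rewrite Ef. set (c := rr a (rho + K) * (Gamma (rho + a) / Gamma rho)).
     assert (0 <= c).
     { apply Rmult_le_pos. unfold rr. apply Rdiv_le_0_compat; [left; apply Gamma_pos| apply Gamma_pos]; lra.
       apply Rdiv_le_0_compat; [left; apply Gamma_pos| apply Gamma_pos]; lra. }
     assert (Hp := poch_ratio_le1 K (rho + a) j HK ltac:(lra)).
     set (q := poch K j / poch (rho + a + K) j) in *.
     assert (0 < poch a j) by (apply poch_pos; auto). assert (0 < INR (fact j)) by apply INR_fact_pos.
     replace (c * (poch a j * q) / INR (fact j)) with ((c * (poch a j / INR (fact j))) * q) by (field; lra).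
     assert (0 <= c * (poch a j / INR (fact j))) by (apply Rmult_le_pos; auto; apply Rdiv_le_0_compat; lra).
     nra. }
   assert (rr a (rho + K) * W <= e * W) by (apply Rmult_le_compat_r; lra).
   assert (e * W < P (Dv_ev B)).
   { unfold e. apply Rmult_lt_reg_r with (W + 1); [lra|]. unfold Rdiv.
     replace (P (Dv_ev B) * / (W + 1) * W * (W + 1)) with (P (Dv_ev B) * W) by (field; lra). nra. }
   lra. }
 assert (HU : P (fun w => exists B, Dv_ev B w) = 0).
 { assert (H := cont_below _ F P HP Dv_ev F_D ltac:(intros; apply D_mono; auto)).
   apply (UL_sequence (fun B => P (Dv_ev B))); auto. eapply cv_ext; [|apply cv_const]. intros; simpl; rewrite HD0; auto. }
 rewrite (P_ext _ F P HP _ (fun w => ~ exists B, Dv_ev B w)).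
 - rewrite (P_compl _ F P HP). rewrite HU; ring. apply (F_ex _ F P HP); apply F_D.
 - intros w; split.
   + intros Hi [B HB]. destruct (Hi (S B)) as [n Hn]. specialize (HB n). lia.
   + intros Hn B. apply NNPP. intros Hc. apply Hn. exists B. intros n. apply NNPP. intros H2. apply Hc. exists n. lia.
Qed.

End Dist.

Theorem theorem1 (Omega : Type) (F : (Omega -> Prop) -> Prop)
  (P : (Omega -> Prop) -> R) (a rho : R) (k : nat -> R)
  (X : nat -> Omega -> nat) :
  is_prob_space Omega F P ->
  0 < a -> 0 < rho -> (forall j, 0 < k j) ->
  (forall j n, F (fun w => X j w = n)) ->
  (forall j n, P (fun w => X j w = n) = GWD_pmf a (k j) rho n) ->
  (forall (s : nat) (x : nat -> nat), (1 <= s)%nat ->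
     P (fun w => forall i, (i < s)%nat -> X i w = x i) = MGWD_pmf a k s rho x) ->
  (forall m : R, infinite_sum k m ->
     P (fun w => exists s, S_eq X w s) = 1
     /\ forall s : nat, P (fun w => S_eq X w s) = GWD_pmf a m rho s)
  /\
  (cv_infty (sum_f_R0 k) -> P (fun w => S_inf X w) = 1).
Proof.
 intros HP Ha Hr Hk HX _ HMG. split.
 - intros m Hm. split.
   + apply (conv_total Omega F P HP X HX a rho k Ha Hr Hk HMG m Hm).
   + intros s. apply (conv_dist Omega F P HP X HX a rho k Ha Hr Hk HMG m Hm).
 - apply (div_case Omega F P HP X HX a rho k Ha Hr Hk HMG).
Qed.
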